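(* Let $\Gamma$ be a group and $S$ a $\Gamma$-graded semigroup. Then there is a $\Gamma$-graded pointed set $X$ and an injective semigroup homomorphism $\psi:S\to\mathcal{T}^{\mathrm{gr}}(X)$ such that $\psi(S_\alpha)\subseteq\mathcal{T}(X)_\alpha$ for all $\alpha\in\Gamma$.
   Context: Semigroups have a zero; $S$ is $\Gamma$-graded via $\deg:S\setminus\{0\}\to\Gamma$ with $\deg(st)=\deg(s)\deg(t)$ when $st\neq0$, $S_\alpha=\deg^{-1}(\alpha)\cup\{0\}$. A pointed set $X$ (with distinguished $0_X$) is $\Gamma$-graded if there is a map $\phi:X\setminus\{0_X\}\to\Gamma$; $X_\alpha=\phi^{-1}(\alpha)\cup\{0_X\}$. $\mathcal T'(X)$ is the semigroup under composition of all maps $X\to X$ fixing $0_X$, with zero the constant map to $0_X$. $\mathcal T(X)_\alpha=\{\psi\in\mathcal T'(X):\psi(X_\beta)\subseteq X_{\alpha\beta}\text{ for all }\beta\in\Gamma\}$ and $\mathcal T^{\mathrm{gr}}(X)=\bigcup_{\alpha}\mathcal T(X)_\alpha$, a $\Gamma$-graded subsemigroup of $\mathcal T'(X)$ with components $\mathcal T(X)_\alpha$. *)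

(* Defs.v *)
Definition is_group (G : Type) (mul : G -> G -> G) (one : G) (inv : G -> G) : Prop :=
  (forall a b c, mul a (mul b c) = mul (mul a b) c) /\
  (forall a, mul one a = a) /\ (forall a, mul a one = a) /\
  (forall a, mul (inv a) a = one) /\ (forall a, mul a (inv a) = one).

Definition is_semigroup0 (S : Type) (smul : S -> S -> S) (zero : S) : Prop :=
  (forall a b c, smul a (smul b c) = smul (smul a b) c) /\
  (forall a, smul zero a = zero) /\ (forall a, smul a zero = zero).

(* deg : S \ {0} -> G, represented as a total function whose values on 0 are
   irrelevant; deg(st) = deg(s) deg(t) whenever st <> 0. *)
Definition is_grading {G S : Type} (mul : G -> G -> G) (smul : S -> S -> S)
  (zero : S) (deg : S -> G) : Prop :=
  forall s t, smul s t <> zero -> deg (smul s t) = mul (deg s) (deg t).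

Definition comp_S {G S : Type} (zero : S) (deg : S -> G) (alpha : G) (s : S) : Prop :=
  s = zero \/ (s <> zero /\ deg s = alpha).

Definition comp_X {G X : Type} (x0 : X) (phi : X -> G) (beta : G) (x : X) : Prop :=
  x = x0 \/ (x <> x0 /\ phi x = beta).

Definition in_T' {X : Type} (x0 : X) (f : X -> X) : Prop := f x0 = x0.

Definition in_T_comp {G X : Type} (mul : G -> G -> G) (x0 : X) (phi : X -> G)
  (alpha : G) (f : X -> X) : Prop :=
  in_T' x0 f /\
  forall beta x, comp_X x0 phi beta x -> comp_X x0 phi (mul alpha beta) (f x).

Definition in_Tgr {G X : Type} (mul : G -> G -> G) (x0 : X) (phi : X -> G)
  (f : X -> X) : Prop :=
  exists alpha, in_T_comp mul x0 phi alpha f.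

(* Main.v *)
Require Import Defs.
From Stdlib Require Import Classical ClassicalEpsilon FunctionalExtensionality.

Theorem proposition2p5
  (G : Type) (mul : G -> G -> G) (one : G) (inv : G -> G)
  (HG : is_group G mul one inv)
  (S : Type) (smul : S -> S -> S) (zero : S)
  (HS : is_semigroup0 S smul zero)
  (deg : S -> G) (Hdeg : is_grading mul smul zero deg) :
  exists (X : Type) (x0 : X) (phi : X -> G) (psi : S -> (X -> X)),
    (forall s, in_Tgr mul x0 phi (psi s)) /\
    (forall s t, psi (smul s t) = (fun x => psi s (psi t x))) /\
    psi zero = (fun _ => x0) /\
    (forall s t, psi s = psi t -> s = t) /\
    (forall alpha s, comp_S zero deg alpha s -> in_T_comp mul x0 phi alpha (psi s)).
Proof.
  destruct HG as [Gassoc _].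
  destruct HS as [Sassoc [Sz1 Sz2]].
  pose (dec := fun (a b : S) => excluded_middle_informative (a = b)).
  pose (x0 := (Some zero, one) : (option S * G)%type).
  pose (app := fun (s : S) (u : option S) =>
     match u with None => s | Some t => smul s t end).
  pose (psi := fun (s : S) (x : (option S * G)%type) =>
     if dec (app s (fst x)) zero then x0
     else (Some (app s (fst x)), mul (deg s) (snd x))).
  assert (Happ : forall s t u, app (smul s t) u = app s (Some (app t u))).
  { intros s t [u|]; simpl; auto. }
  assert (Hx0 : forall s, psi s x0 = x0).
  { intros s; unfold psi; simpl; destruct (dec (smul s zero) zero); auto.
    exfalso; auto. }
  assert (Hzero : psi zero = (fun _ => x0)).
  { apply functional_extensionality; intros [[u|] g]; unfold psi; simpl;
    [destruct (dec (smul zero u) zero) | destruct (dec zero zero)]; auto;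
    exfalso; auto. }
  assert (HT : forall s, in_T_comp mul x0 snd (deg s) (psi s)).
  { intros s; split; [apply Hx0|].
    intros beta x [Hx | [Hx Hb]].
    - subst x; left; apply Hx0.
    - unfold psi; destruct (dec (app s (fst x)) zero); [left; auto|].
      right; split; [|simpl; congruence].
      intro E; apply n; inversion E; auto. }
  exists (option S * G)%type, x0, snd, psi.
  split; [intros s; exists (deg s); apply HT|].
  split.
  { intros s t; apply functional_extensionality; intros [u g].
    unfold psi at 1 3; simpl fst; simpl snd.
    rewrite Happ.
    destruct (dec (app t u) zero) as [E|E].
    - rewrite Hx0. rewrite E; simpl.
      destruct (dec (smul s zero) zero); auto. exfalso; auto.
    - unfold psi; simpl fst; simpl snd.
      destruct (dec (app s (Some (app t u))) zero); auto.
      f_equal. rewrite Gassoc. f_equal. apply Hdeg.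
      intro E2. apply n. rewrite <- Happ, E2. destruct u; simpl; auto. }
  split; [exact Hzero|].
  split.
  { intros s t E.
    assert (E' := f_equal (fun f => f (None, one)) E). simpl in E'.
    unfold psi in E'; simpl in E'.
    destruct (dec s zero); destruct (dec t zero); try congruence;
    inversion E'; congruence. }
  intros alpha s [Hs | [Hs Ha]].
  - subst s; rewrite Hzero; split; [reflexivity|]. intros; left; auto.
  - subst alpha; apply HT.
Qed.
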